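(* Let $A\in\mathbb{R}^{m\times n}$ be semimonotone ($A^{\dagger}\geq 0$) and let $A=U_1-V_1=U_2-V_2$ be two convergent proper nonnegative splittings of different types (one of type I and the other of type II). If $U_1^{\dagger}>U_2^{\dagger}$, then there exists $\alpha$ with $0<\alpha<1$ such that $U_2^{\dagger}\leq\alpha U_1^{\dagger}$, and $\rho(U_1^{\dagger}V_1)<\rho(U_2^{\dagger}V_2)<1$.
   Context: $A^{\dagger}$ denotes the Moore–Penrose inverse and $\rho(\cdot)$ the spectral radius. Inequalities are entrywise; $X>Y$ means every entry of $X-Y$ is positive. A splitting $A=U-V$ is proper if $R(U)=R(A)$ and $N(U)=N(A)$; it is convergent if $\rho(U^{\dagger}V)<1$. A proper splitting is a proper nonnegative splitting of type I if $U^{\dagger}V\geq 0$, and of type II if $VU^{\dagger}\geq 0$. *)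

(* Defs.v *)
From HB Require Import structures.
From mathcomp Require Import all_boot all_order all_algebra.
From mathcomp Require Import closed_field complex.
Set Implicit Arguments. Unset Strict Implicit. Unset Printing Implicit Defensive.
Import Order.TTheory GRing.Theory Num.Theory.
Local Open Scope ring_scope.

(* Real matrices are taken over an arbitrary real closed field R (e.g. the reals). *)

Definition is_MP_inverse (R : rcfType) (m n : nat)
    (A : 'M[R]_(m, n)) (X : 'M[R]_(n, m)) : Prop :=
  [/\ A *m X *m A = A, X *m A *m X = X,
      (A *m X)^T = A *m X & (X *m A)^T = X *m A].

Definition mx_le (R : rcfType) (m n : nat) (X Y : 'M[R]_(m, n)) : Prop :=
  forall i j, X i j <= Y i j.
Definition mx_lt (R : rcfType) (m n : nat) (X Y : 'M[R]_(m, n)) : Prop :=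
  forall i j, X i j < Y i j.

Definition in_range (R : rcfType) (m n : nat) (A : 'M[R]_(m, n)) (y : 'cV[R]_m) : Prop :=
  exists x : 'cV[R]_n, y = A *m x.
Definition in_null (R : rcfType) (m n : nat) (A : 'M[R]_(m, n)) (x : 'cV[R]_n) : Prop :=
  A *m x = 0.

Definition proper_splitting (R : rcfType) (m n : nat) (A U V : 'M[R]_(m, n)) : Prop :=
  [/\ A = U - V,
      (forall y, in_range U y <-> in_range A y) &
      (forall x, in_null U x <-> in_null A x)].

(* spectral radius: max modulus of the (complex) eigenvalues, i.e. of the
   roots in R[i] of the characteristic polynomial (0 for the empty matrix). *)
Definition spectral_radius (R : rcfType) (n : nat) (M : 'M[R]_n) : R :=
  let p := char_poly (map_mx (real_complex R) M) in
  \big[Num.max/0]_(z <- sval (closed_field_poly_normal p)) Normc.normc z.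

(* convergent splitting: rho(U^+ V) < 1, where Ud is the MP inverse of U *)
Definition convergent_splitting (R : rcfType) (m n : nat)
    (U V : 'M[R]_(m, n)) (Ud : 'M[R]_(n, m)) : Prop :=
  spectral_radius (Ud *m V) < 1.

Definition pns_type_I (R : rcfType) (m n : nat) (A U V : 'M[R]_(m, n)) (Ud : 'M[R]_(n, m)) : Prop :=
  proper_splitting A U V /\ mx_le 0 (Ud *m V).
Definition pns_type_II (R : rcfType) (m n : nat) (A U V : 'M[R]_(m, n)) (Ud : 'M[R]_(n, m)) : Prop :=
  proper_splitting A U V /\ mx_le 0 (V *m Ud).

(* Main.v *)
Require Import Defs.
From HB Require Import structures.
From mathcomp Require Import all_boot all_order all_algebra.
From mathcomp Require Import closed_field complex.
From mathcomp Require Import polyrcf.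
Import Order.TTheory GRing.Theory Num.Theory.
Local Open Scope ring_scope.
Set Implicit Arguments. Unset Strict Implicit. Unset Printing Implicit Defensive.

Lemma ex_argmin (R : realDomainType) (I : finType) (i : I) (F : I -> R) :
  exists i0, forall j, F i0 <= F j.
Proof. by case: (@arg_minP _ R I i predT F isT) => j _ H; exists j => k; apply: H. Qed.
Lemma ex_argmax (R : realDomainType) (I : finType) (i : I) (F : I -> R) :
  exists i0, forall j, F j <= F i0.
Proof. by case: (@arg_maxP _ R I i predT F isT) => j _ H; exists j => k; apply: H. Qed.

Section Zmat.
Variable R : realFieldType.

Lemma Zmono k l (B : 'M[R]_k) (x : 'cV[R]_k) (V : 'M[R]_(k, l)) :
  (forall i j, i != j -> B i j <= 0) -> (forall i, 0 < x i 0) ->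
  (forall i, 0 < (B *m x) i 0) -> (forall i j, 0 <= (B *m V) i j) ->
  forall i j, 0 <= V i j.
Proof.
move=> Boff xpos Bxpos BV i j; rewrite leNgt; apply/negP => Vneg.
have [i0 Hi0] := ex_argmin i (fun i => V i j / x i 0).
set c := V i0 j / x i0 0.
have cneg : c < 0.
  apply: (le_lt_trans (Hi0 i)); rewrite pmulr_llt0 ?invr_gt0 //.
have ge : forall i, 0 <= V i j - c * x i 0.
  move=> i1; rewrite subr_ge0 -ler_pdivlMr //; exact: Hi0.
have eq0 : V i0 j - c * x i0 0 = 0.
  by rewrite /c mulfVK ?subrr // gt_eqF.
have pos : 0 < (B *m V) i0 j - c * (B *m x) i0 0.
  have h1 := BV i0 j; have h2 : 0 < - c * (B *m x) i0 0 by rewrite mulr_gt0 ?oppr_gt0.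
  by rewrite -mulNr; apply: (le_lt_trans h1); rewrite ltrDl.
have : (B *m V) i0 j - c * (B *m x) i0 0 = \sum_i1 B i0 i1 * (V i1 j - c * x i1 0).
  rewrite !mxE mulr_sumr -sumrB; apply: eq_bigr => i1 _.
  by rewrite mulrBr mulrCA.
move=> E; move: pos; rewrite E ltNge => /negP; apply.
apply: sumr_le0 => i1 _.
have [->|ne] := eqVneq i1 i0; first by rewrite eq0 mulr0.
by rewrite mulr_le0_ge0 // Boff // eq_sym.
Qed.

End Zmat.

Section Good.
Variable R : rcfType.
Variable k : nat.
Variable M : 'M[R]_k.
Hypothesis hM : forall i j, 0 <= M i j.

Definition good (t : R) : bool := (t%:M - M \in unitmx) &&
  [forall i, [forall j, 0 <= invmx (t%:M - M) i j]].

Lemma Boff t : forall i j, i != j -> (t%:M - M) i j <= 0.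
Proof. by move=> i j ij; rewrite !mxE (negPf ij) mulr0n sub0r oppr_le0. Qed.

Lemma Bmul t (x : 'cV[R]_k) i : ((t%:M - M) *m x) i 0 = t * x i 0 - (M *m x) i 0.
Proof. by rewrite mulmxBl mul_scalar_mx !mxE. Qed.

Lemma good_of_pos t (x : 'cV[R]_k) : (forall i, 0 < x i 0) ->
  (forall i, (M *m x) i 0 < t * x i 0) -> good t.
Proof.
move=> xpos hx.
have Bx : forall i, 0 < ((t%:M - M) *m x) i 0 by move=> i; rewrite Bmul subr_gt0.
have unit : t%:M - M \in unitmx.
  rewrite unitmxE unitfE -det_tr; apply/negP => /det0P [v vnz vB].
  have h0 : (t%:M - M) *m v^T = 0 by rewrite -[LHS]trmxK trmx_mul trmxK vB trmx0.
  have g1 := Zmono (@Boff t) xpos Bx (V := v^T).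
  have g2 := Zmono (@Boff t) xpos Bx (V := - v^T).
  move/eqP: vnz; apply; apply/matrixP => i j.
  rewrite h0 mulmxN h0 oppr0 in g1 g2.
  have h1 := g1 (fun i j => ltac:(by rewrite mxE)) j i.
  have h2 := g2 (fun i j => ltac:(by rewrite mxE)) j i.
  move: h1 h2; rewrite !mxE => h1 h2.
  by apply/eqP; rewrite eq_le h1 -oppr_ge0 h2.
rewrite /good unit /=; apply/forallP => i; apply/forallP => j.
apply: (Zmono (@Boff t) xpos Bx) => i1 j1.
by rewrite mulmxV // mxE ler0n.
Qed.


Lemma Mx_ge0 (x : 'cV[R]_k) i : (forall j, 0 <= x j 0) -> 0 <= (M *m x) i 0.
Proof. by move=> hx; rewrite mxE; apply: sumr_ge0 => j _; apply: mulr_ge0. Qed.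

Lemma good_witness t : good t -> exists x : 'cV[R]_k,
  (forall i, 0 < x i 0) /\ (forall i, (M *m x) i 0 < t * x i 0).
Proof.
case/andP => un /forallP Nge.
pose x : 'cV[R]_k := invmx (t%:M - M) *m const_mx 1.
have x0 : forall i, 0 <= x i 0.
  move=> i; rewrite mxE; apply: sumr_ge0 => j _; rewrite mxE mulr1.
  exact: (forallP (Nge i) j).
have Bx : (t%:M - M) *m x = const_mx 1 by rewrite mulmxA mulmxV // mul1mx.
have e : forall i, t * x i 0 = 1 + (M *m x) i 0.
  move=> i; have := Bmul t x i; rewrite Bx mxE => /eqP.
  by rewrite eq_sym subr_eq addrC => /eqP.
have tx : forall i, 0 < t * x i 0.
  by move=> i; rewrite e; apply: lt_le_trans (ltr01) _; rewrite lerDl Mx_ge0.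
exists x; split.
  move=> i; rewrite lt_neqAle x0 andbT; apply/negP => /eqP xi0.
  by have := tx i; rewrite -xi0 mulr0 ltxx.
by move=> i; rewrite e ltrDr ltr01.
Qed.

Variable i0 : 'I_k.

Lemma good_pos t : good t -> 0 < t.
Proof.
case/good_witness => x [xp hx].
have := le_lt_trans (Mx_ge0 i0 (fun j => ltW (xp j))) (hx i0).
by rewrite pmulr_lgt0.
Qed.

Lemma good_up t s : good t -> t <= s -> good s.
Proof.
case/good_witness => x [xp hx] ts; apply: (good_of_pos xp) => i.
by apply: lt_le_trans (hx i) _; rewrite ler_pM2r.
Qed.

Lemma good_open t : good t -> exists2 e, 0 < e & good (t - e).
Proof.
case/good_witness => x [xp hx].
pose d i := t * x i 0 - (M *m x) i 0.
have dp : forall i, 0 < d i by move=> i; rewrite subr_gt0.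
have [i1 hi1] := ex_argmin i0 (fun i => d i / x i 0).
have rp : 0 < d i1 / x i1 0 by rewrite divr_gt0.
exists (d i1 / x i1 0 / 2); first by rewrite divr_gt0.
apply: (good_of_pos xp) => i.
rewrite mulrBl ltrBrDl -ltrBrDr.
have h : d i1 / x i1 0 / 2 * x i 0 < d i.
  rewrite -ltr_pdivlMr // (lt_le_trans _ (hi1 i)) //.
  by rewrite ltr_pdivrMr // ltr_pMr // ltr1n.
by move: h; rewrite /d.
Qed.

Lemma good_big : good (1 + \sum_i \sum_j M i j).
Proof.
apply: (good_of_pos (x := const_mx 1)) => i; first by rewrite mxE ltr01.
have h : (M *m (const_mx 1 : 'cV[R]_k)) i 0 <= \sum_i \sum_j M i j.
  rewrite (bigD1 i) //= mxE.
  rewrite [X in X <= _](eq_bigr (fun j => M i j)); last by move=> j _; rewrite mxE mulr1.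
  by rewrite lerDl sumr_ge0 // => j _; apply: sumr_ge0.
by apply: (le_lt_trans h); rewrite mxE mulr1 ltrDr ltr01.
Qed.

End Good.

Local Notation noroot p := (forall x, ~~ root p x).
Section Tau.
Variable R : rcfType.
Variable k : nat.
Variable M : 'M[R]_k.
Hypothesis hM : forall i j, 0 <= M i j.
Variable i0 : 'I_k.

Local Notation P := (char_poly M).
Local Notation Aj := (\adj (char_poly_mx M)).

Lemma ev_cpm t : map_mx (horner_eval t) (char_poly_mx M) = t%:M - M.
Proof.
apply/matrixP => i j; rewrite !mxE /= horner_evalE hornerD hornerN hornerMn hornerX hornerC.
by [].
Qed.

Lemma ev_P t : P.[t] = \det (t%:M - M).
Proof. by rewrite -ev_cpm det_map_mx. Qed.

Lemma ev_adj t i j : (Aj i j).[t] = \adj (t%:M - M) i j.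
Proof. by rewrite -ev_cpm -map_mx_adj [RHS]mxE. Qed.

Lemma sgn_inv (d a : R) : d != 0 -> (0 <= d^-1 * a) = (0 <= a * d).
Proof.
move=> d0; have -> : d^-1 * a = (a * d) * (d^-1)^+2.
  by rewrite expr2 -mulrA (mulrA d) mulfV // mul1r mulrC.
by rewrite pmulr_lge0 // exprn_even_gt0 //= invr_eq0.
Qed.

Lemma good_iff t : good M t = (P.[t] != 0) &&
   [forall i, [forall j, 0 <= (Aj i j * P).[t]]].
Proof.
rewrite /good unitmxE unitfE -ev_P.
case: eqP => //= Pt; rewrite /invmx unitmxE unitfE -ev_P.
have -> : (P.[t] != 0) = true by apply/eqP.
apply: eq_forallb => i; apply: eq_forallb => j.
by rewrite mxE hornerM ev_adj sgn_inv //; apply/eqP.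
Qed.


Lemma P_neq0 : P != 0.
Proof. by rewrite monic_neq0 // char_poly_monic. Qed.

Definition Qp := P * \prod_(ij : 'I_k * 'I_k | Aj ij.1 ij.2 != 0) Aj ij.1 ij.2.

Lemma Qp_neq0 : Qp != 0.
Proof. by rewrite mulf_neq0 ?P_neq0 //; apply/prodf_neq0 => ij. Qed.

Lemma root_Qp_P x : root P x -> root Qp x.
Proof. by rewrite /Qp rootM => ->. Qed.

Lemma root_Qp_A i j x : Aj i j != 0 -> root (Aj i j) x -> root Qp x.
Proof.
move=> An0 r.
by rewrite /Qp rootM (bigD1 (i, j)) //= rootM r orbT.
Qed.

Definition tb := 1 + \sum_i \sum_j M i j.
Definition Lr := roots Qp 0 tb.
Definition tau := \big[Num.max/0]_(x <- Lr | ~~ good M x) x.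

Lemma tau_prop : 0 <= tau /\ ~~ good M tau.
Proof.
suff : (0 <= tau) && ~~ good M tau by case/andP.
rewrite /tau big_seq_cond; apply: (big_ind (fun x => (0 <= x) && ~~ good M x)).
- rewrite lexx /=; apply/negP => /(good_pos hM i0); by rewrite ltxx.
- move=> x y /andP[x0 gx] /andP[y0 gy]; rewrite /Num.max.
  by case: ifP => _; rewrite ?x0 ?gx ?y0 ?gy.
- move=> x /andP[xL gx]; rewrite gx andbT.
  by move: xL; rewrite /Lr in_roots => /and3P[_ /itvP -> _] //.
Qed.

Lemma tau_ge x : x \in Lr -> ~~ good M x -> x <= tau.
Proof. by move=> xL gx; rewrite /tau; exact: (@le_bigmax_seq _ _ _ Lr 0 x (fun x => ~~ good M x) id xL gx). Qed.


Lemma neg_notgood (q : {poly R}) t y : t < y -> q.[t] < 0 ->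
  {in `]t, y[, noroot q} -> (forall s, good M s -> 0 <= q.[s]) -> ~~ good M y.
Proof.
move=> ty qt nr gq; apply/negP => gy.
have [e e0 ge] := good_open hM i0 gy.
pose s := Num.max (y - e) ((t + y) / 2).
have gs : good M s by apply: (good_up hM ge); rewrite le_max lexx.
have ts : t < s by rewrite lt_max; apply/orP; right; rewrite ltr_pdivlMr // mulrDr mulr1 ltrD2l.
have sy : s < y.
  rewrite gt_max ltrBlDr ltrDl e0 /= ltr_pdivrMr // mulrDr mulr1 ltrD2r //.
have nr2 : {in `[t, s], noroot q}.
  move=> z; rewrite in_itv /= => /andP[tz zs].
  have [->|zt] := eqVneq z t; first by rewrite rootE lt_eqF.
  by apply: nr; rewrite in_itv /= (le_lt_trans zs sy) andbT lt_neqAle eq_sym zt tz.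
have := @polyrN0_itv _ _ _ nr2 t s.
rewrite !in_itv /= lexx (ltW ts) lexx /= => /(_ isT isT) => e1.
have := gq s gs; rewrite leNgt => /negP; apply.
by rewrite -sgr_cp0 e1 sgr_cp0.
Qed.

Lemma good_above t : tau < t -> good M t.
Proof.
move=> taut; apply/contraT => ng.
have [tau0 _] := tau_prop.
have t0 : 0 < t := le_lt_trans tau0 taut.
have ttb : t < tb.
  rewrite ltNge; apply/negP => tbt; move/negP: ng; apply.
  exact: (good_up hM (good_big hM) tbt).
have inL : forall y, 0 < y -> y < tb -> root Qp y -> y \in Lr.
  by move=> y y0 ytb r; rewrite /Lr in_roots r Qp_neq0 in_itv /= y0 ytb.
have [Pt0|Ptn0] := eqVneq P.[t] 0.
  have := tau_ge (inL t t0 ttb (root_Qp_P (introT eqP Pt0))) ng.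
  by rewrite leNgt taut.
move: ng; rewrite good_iff Ptn0 /= => /forallPn [i /forallPn [j]].
rewrite -ltNge => qneg.
set q := Aj i j * P in qneg.
have Ajn0 : Aj i j != 0 by apply/negP => /eqP A0; move: qneg; rewrite /q A0 mul0r horner0 ltxx.
have gq : forall s, good M s -> 0 <= q.[s].
  move=> s; rewrite good_iff => /andP[_ /forallP /(_ i) /forallP /(_ j)] //.
case: (next_rootP q t tb).
- move=> q0; move: qneg; by rewrite q0 horner0 ltxx.
- move=> y qn0 qy yin nr.
  have ty : t < y by rewrite (itvP yin).
  have ytb : y < tb by rewrite (itvP yin).
  have ng := neg_notgood ty qneg nr gq.
  have ry : root Qp y.
    move: qy; rewrite /q hornerM => /eqP; rewrite mulf_eq0 => /orP[h|h].
      exact: (root_Qp_A Ajn0 h).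
    exact: root_Qp_P h.
  have := tau_ge (inL y (lt_trans t0 ty) ytb ry) ng.
  by rewrite leNgt (lt_trans taut ty).
- move=> c qn0 cE nr.
  have := neg_notgood ttb qneg nr gq.
  by rewrite (good_big hM).
Qed.

End Tau.

Section Fac.
Variable R : rcfType.

Lemma cont_ge0 (p : {poly R}) a : (forall t, a < t -> 0 <= p.[t]) -> 0 <= p.[a].
Proof.
move=> h; rewrite leNgt; apply/negP => pa.
have pa' : 0 < - p.[a] by rewrite oppr_gt0.
have [d d0 hd] := poly_cont a p pa'.
have := hd (a + d / 2).
rewrite addrAC subrr add0r ger0_norm ?divr_ge0 ?ltW // ltr_pdivrMr // ltr_pMr // ltr1n.
move=> /(_ isT) => h2.
have := h (a + d / 2); rewrite ltrDl divr_gt0 // => /(_ isT) => h3.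
move: h2; rewrite ltr_norml => /andP[_]; rewrite ltrBlDr addNr.
by rewrite ltNge h3.
Qed.

Lemma vfactor n (a : R) (Y : 'cV[{poly R}]_n) : Y != 0 ->
  exists j, exists2 Z : 'cV[{poly R}]_n, Y = ('X - a%:P)^+j *: Z &
    exists i, ~~ root (Z i 0) a.
Proof.
move: {2}(\sum_i size (Y i 0%R))%N (leqnn (\sum_i size (Y i 0%R))%N) => N.
elim: N Y => [|N IH] Y hs Ynz.
  case/negP: Ynz; apply/eqP/matrixP => i j; rewrite mxE (ord1 j).
  apply/eqP; rewrite -size_poly_eq0 -leqn0; apply: leq_trans hs.
  by rewrite (bigD1 i) //= leq_addr.
case: (boolP [exists i, ~~ root (Y i 0) a]) => [/existsP [i ri] | /existsPn allr].
  by exists 0%N; exists Y; [rewrite expr0 scale1r | exists i].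
pose Y' := map_mx (fun p => p %/ ('X - a%:P)) Y.
have YE : Y = ('X - a%:P) *: Y'.
  apply/matrixP => i j; rewrite !mxE (ord1 j) mulrC divpK //.
  by rewrite dvdp_XsubCl; move: (allr i); rewrite negbK.
have Y'nz : Y' != 0 by apply: contraNneq Ynz => e; rewrite YE e scaler0.
have [i1 Yi1] : exists i, Y i 0 != 0.
  apply/existsP; apply: contraNT Ynz => /existsPn h; apply/eqP/matrixP => i j.
  by rewrite (ord1 j) mxE; move: (h i); rewrite negbK => /eqP.
have sz : forall i, size (Y' i 0) = (size (Y i 0)).-1.
  by move=> i; rewrite mxE size_divp ?polyXsubC_eq0 // size_XsubC subn1.
have hs' : (\sum_i size (Y' i 0%R) <= N)%N.
  rewrite -ltnS; apply: leq_trans hs.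
  rewrite (bigD1 i1) //= [X in (_ < X)%N](bigD1 i1) //= -addSn leq_add //.
    by rewrite sz prednK // lt0n size_poly_eq0.
  by apply: leq_sum => i _; rewrite sz leq_pred.
have [j [Z YZ nr]] := IH Y' hs' Y'nz.
exists j.+1; exists Z => //.
by rewrite YE YZ scalerA -exprS.
Qed.

End Fac.

Section PFeig.
Variable R : rcfType.
Variable k : nat.
Variable M : 'M[R]_k.
Hypothesis hM : forall i j, 0 <= M i j.
Variable i0 : 'I_k.

Local Notation P := (char_poly M).
Local Notation Aj := (\adj (char_poly_mx M)).
Local Notation T := (tau M).

Lemma P_pos t : T < t -> 0 < P.[t].
Proof.
move=> Tt.
have gA : forall s, T < s -> P.[s] != 0.
  by move=> s Ts; have := good_above hM i0 Ts; rewrite good_iff => /andP[].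
have lc : 0 < lead_coef P by rewrite (monicP (char_poly_monic M)) ltr01.
have [n hn] := @poly_pinfty_gt_lc _ P lc.
pose u := Num.max n t.
have Pu : 0 < P.[u].
  apply: lt_le_trans (hn u _); first by rewrite (monicP (char_poly_monic M)) ltr01.
  by rewrite le_max lexx.
have tu : t <= u by rewrite le_max lexx orbT.
have nr : {in `[t, u], forall x, ~~ root P x}.
  move=> x; rewrite in_itv /= => /andP[tx _]; rewrite rootE; apply: gA.
  exact: lt_le_trans Tt tx.
have := @polyrN0_itv _ _ _ nr t u; rewrite !in_itv /= lexx tu lexx /= => /(_ isT isT) e.
by rewrite -sgr_cp0 -e sgr_cp0.
Qed.

Lemma Aj_ge0 t i j : T < t -> 0 <= (Aj i j).[t].
Proof.
move=> Tt; have := good_above hM i0 Tt; rewrite good_iff => /andP[_].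
move=> /forallP /(_ i) /forallP /(_ j); rewrite hornerM pmulr_lge0 //.
exact: P_pos.
Qed.

Lemma PF_eig : exists r : R, exists2 z : 'cV[R]_k,
  (forall i, 0 <= z i 0) /\ z != 0 & M *m z = r *: z.
Proof.
have [T0 ngT] := tau_prop hM i0.
pose Y := Aj *m (const_mx 1 : 'cV[{poly R}]_k).
have eq1 : char_poly_mx M *m Y = P *: const_mx 1.
  by rewrite /Y mulmxA mul_mx_adj mul_scalar_mx.
have Ynz : Y != 0.
  apply/negP => /eqP Y0; move: eq1; rewrite Y0 mulmx0 => /matrixP /(_ i0 0).
  rewrite !mxE mulr1 => /esym /eqP; by rewrite (negPf (P_neq0 M)).
have [j [Z YE [i1 nri1]]] := vfactor T Ynz.
have [mu [Pt nrPt PE]] := multiplicity_XsubC P T.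
rewrite P_neq0 /= in nrPt.
have Yge : forall i t, T < t -> 0 <= (Y i 0).[t].
  move=> i t Tt; rewrite mxE horner_sum; apply: sumr_ge0 => l _.
  have -> : (const_mx 1 : 'cV[{poly R}]_k) l 0 = 1 by rewrite mxE.
  by rewrite mulr1; apply: Aj_ge0.
have Zge : forall i, 0 <= (Z i 0).[T].
  move=> i; apply: cont_ge0 => t Tt.
  have := Yge i t Tt; rewrite YE mxE hornerM horner_exp hornerXsubC.
  by rewrite pmulr_rge0 // exprn_gt0 // subr_gt0.
pose z := map_mx (horner_eval T) Z.
have zge : forall i, 0 <= z i 0 by move=> i; rewrite mxE; exact: Zge.
have znz : z != 0.
  apply/negP => /eqP /matrixP /(_ i1 0); rewrite !mxE => /eqP; by rewrite -rootE (negPf nri1).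
pose W := char_poly_mx M *m Z.
have WE : forall i, ('X - T%:P) ^+ j * W i 0 = Pt * ('X - T%:P) ^+ mu.
  move=> i; move: eq1; rewrite YE -scalemxAr => /matrixP /(_ i 0).
  by rewrite !mxE mulr1 -PE.
have Bz : forall i, ((T%:M - M) *m z) i 0 = (W i 0).[T].
  by move=> i; rewrite -ev_cpm -map_mxM mxE.
have XTn0 : forall m, ('X - T%:P) ^+ m != 0 :> {poly R}.
  by move=> m; rewrite expf_neq0 // polyXsubC_eq0.
case: (ltngtP j mu) => hjm.
- exists T; exists z => //.
  have Bz0 : (T%:M - M) *m z = 0.
    apply/matrixP => i l; rewrite (ord1 l) Bz [RHS]mxE.
    have := WE i; rewrite -(subnKC (ltnW hjm)) exprD mulrCA.
    move=> /(mulfI (XTn0 j)) ->; rewrite hornerM horner_exp hornerXsubC subrr expr0n.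
    by rewrite subn_eq0 leqNgt hjm mulr0.
  by move: Bz0; rewrite mulmxBl mul_scalar_mx => /eqP; rewrite subr_eq0 => /eqP <-.
- exfalso; have := WE i0; rewrite -(subnKC (ltnW hjm)) exprD -mulrA mulrC.
  move=> /(mulIf (XTn0 mu)) /(congr1 (horner^~ T)).
  rewrite hornerM horner_exp hornerXsubC subrr expr0n subn_eq0 leqNgt hjm mul0r.
  by move=> /esym /eqP; rewrite -rootE (negPf nrPt).
- exfalso; subst mu.
  have WPt : forall i, W i 0 = Pt by move=> i; have := WE i; rewrite mulrC => /(mulIf (XTn0 j)).
  have c0 : 0 < Pt.[T].
    rewrite lt_neqAle eq_sym -rootE nrPt /=; apply: cont_ge0 => t Tt.
    have := P_pos Tt; rewrite PE hornerM horner_exp hornerXsubC pmulr_lgt0 ?exprn_gt0 ?subr_gt0 //.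
    exact: ltW.
  have hz : forall i, (M *m z) i 0 < T * z i 0.
    move=> i; have := Bz i; rewrite Bmul WPt => e.
    by rewrite -subr_gt0 e.
  have zpos : forall i, 0 < z i 0.
    move=> i; have h := le_lt_trans (Mx_ge0 hM i zge) (hz i).
    rewrite lt_neqAle zge andbT; apply/negP => /eqP z0; move: h; by rewrite -z0 mulr0 ltxx.
  by move/negP: ngT; apply; apply: (good_of_pos hM zpos hz).
Qed.

End PFeig.




Lemma char_poly_tr (F : comNzRingType) n (A : 'M[F]_n) : char_poly A^T = char_poly A.
Proof.
rewrite /char_poly -det_tr; congr (\det _); apply/matrixP => i j.
by rewrite !mxE eq_sym.
Qed.

Lemma root_col_eig (F : fieldType) n (A : 'M[F]_n) z :
  root (char_poly A) z <-> exists2 v : 'cV[F]_n, v != 0 & A *m v = z *: v.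
Proof.
rewrite -char_poly_tr -eigenvalue_root_char; split.
  case/eigenvalueP => v vA vnz; exists v^T; first by rewrite trmx_eq0.
  by rewrite -[A]trmxK -trmx_mul vA linearZ.
case=> v vnz Av; apply/eigenvalueP; exists v^T; last by rewrite trmx_eq0.
by rewrite -trmx_mul Av linearZ.
Qed.

Section Spec.
Variable R : rcfType.
Local Notation rc := (real_complex R).
Local Open Scope complex_scope.

Lemma normc_real (r : R) : Normc.normc (r%:C) = `|r|.
Proof. by rewrite /Normc.normc /= expr0n /= addr0 sqrtr_sqr. Qed.

Lemma normc_ge0 (z : R[i]) : 0 <= Normc.normc z.
Proof. by case: z => a b; rewrite /Normc.normc sqrtr_ge0. Qed.

Lemma normc_sum (I : Type) (r : seq I) (F : I -> R[i]) :
  Normc.normc (\sum_(i <- r) F i) <= \sum_(i <- r) Normc.normc (F i).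
Proof.
elim: r => [|a r IH]; first by rewrite !big_nil Normc.normc0.
rewrite !big_cons; apply: le_trans (@le_normcD R (F a) (\sum_(j <- r) F j)) _.
by rewrite lerD2l.
Qed.

Lemma sr_root_le n (M : 'M[R]_n) (z : R[i]) :
  root (char_poly (map_mx rc M)) z -> Normc.normc z <= spectral_radius M.
Proof.
rewrite /spectral_radius; case: closed_field_poly_normal => rs /= E.
have lc : lead_coef (char_poly (map_mx rc M)) = 1 by apply/monicP; exact: char_poly_monic.
move=> rz; have zin : z \in rs.
  by move: rz; rewrite {1}E lc scale1r root_prod_XsubC.
exact: (@le_bigmax_seq _ _ _ rs 0 z predT (@Normc.normc R) zin isT).
Qed.

Lemma sr_lt n (M : 'M[R]_n) s : 0 < s ->
  (forall z, root (char_poly (map_mx rc M)) z -> Normc.normc z < s) ->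
  spectral_radius M < s.
Proof.
move=> s0 h; rewrite /spectral_radius; case: closed_field_poly_normal => rs /= E.
have lc : lead_coef (char_poly (map_mx rc M)) = 1 by apply/monicP; exact: char_poly_monic.
rewrite big_seq; apply: (big_ind (fun x => x < s)) => //.
  by move=> x y xs ys; rewrite gt_max xs ys.
by move=> z zin; apply: h; rewrite E lc scale1r root_prod_XsubC.
Qed.

Lemma sr_ge0 n (M : 'M[R]_n) : 0 <= spectral_radius M.
Proof.
rewrite /spectral_radius; case: closed_field_poly_normal => rs /= _.
apply: (big_ind (fun x => 0 <= x)) => //; last by move=> z _; apply: normc_ge0.
by move=> x y x0 y0; rewrite le_max x0.
Qed.


Lemma U_bound n (T : 'M[R]_n) (x : 'cV[R]_n) s :
  (forall i j, 0 <= T i j) -> (forall i, 0 < x i 0) ->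
  (forall i, (T *m x) i 0 < s * x i 0) ->
  forall z, root (char_poly (map_mx rc T)) z -> Normc.normc z < s.
Proof.
move=> T0 xp hx z /root_col_eig [v vnz Tv].
pose a i := Normc.normc (v i 0).
have [i1 vi1] : exists i, v i 0 != 0.
  apply/existsP; apply: contraNT vnz => /existsPn h; apply/eqP/matrixP => i j.
  by rewrite (ord1 j) mxE; move: (h i); rewrite negbK => /eqP.
have [i2 hi2] := ex_argmax i1 (fun i => a i / x i 0).
set c := a i2 / x i2 0.
have a1 : 0 < a i1.
  rewrite lt_neqAle normc_ge0 andbT eq_sym; apply/negP => /eqP /Normc.eq0_normc.
  by apply/eqP.
have c0 : 0 < c by apply: lt_le_trans (hi2 i1); rewrite divr_gt0.
have ac : forall i, a i <= c * x i 0 by move=> i; rewrite -ler_pdivrMr //; exact: hi2.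
have a2 : a i2 = c * x i2 0 by rewrite /c mulfVK // gt_eqF.
have a2p : 0 < a i2 by rewrite a2 mulr_gt0.
have e : z * v i2 0 = \sum_j (T i2 j)%:C * v j 0.
  by move: Tv => /matrixP /(_ i2 0); rewrite !mxE => <-; apply: eq_bigr => j _; rewrite mxE.
have h1 : Normc.normc z * a i2 <= \sum_j T i2 j * a j.
  rewrite /a -Normc.normcM e. apply: (le_trans (normc_sum _ _)).
  by apply: ler_sum => j _; rewrite Normc.normcM normc_real ger0_norm.
have h2 : \sum_j T i2 j * a j <= c * (T *m x) i2 0.
  rewrite mxE mulr_sumr; apply: ler_sum => j _.
  by rewrite mulrCA ler_wpM2l.
have h3 : c * (T *m x) i2 0 < s * a i2 by rewrite a2 mulrCA ltr_pM2l.
by rewrite -(ltr_pM2r a2p); apply: le_lt_trans h1 (le_lt_trans h2 h3).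
Qed.

Lemma root_transfer p q (X : 'M[R]_(p, q)) (Y : 'M[R]_(q, p)) z : z != 0 ->
  root (char_poly (map_mx rc (X *m Y))) z -> root (char_poly (map_mx rc (Y *m X))) z.
Proof.
move=> z0 /root_col_eig [v vnz XYv]; apply/root_col_eig.
exists (map_mx rc Y *m v).
  apply/negP => /eqP u0; move/negP: vnz; apply.
  have : z *: v = 0 by rewrite -XYv map_mxM -mulmxA u0 mulmx0.
  by move/eqP; rewrite scaler_eq0 (negPf z0).
by rewrite map_mxM -mulmxA (mulmxA (map_mx rc X)) -map_mxM XYv scalemxAr.
Qed.

Lemma real_eig_root n (A : 'M[R]_n) (w : 'cV[R]_n) r : w != 0 ->
  A *m w = r *: w -> root (char_poly (map_mx rc A)) (r%:C).
Proof.
move=> wnz Aw; apply/root_col_eig; exists (map_mx rc w).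
  by rewrite map_mx_eq0.
by rewrite -map_mxM Aw map_mxZ.
Qed.

Lemma root_tr n (A : 'M[R]_n) z :
  root (char_poly (map_mx rc A^T)) z = root (char_poly (map_mx rc A)) z.
Proof. by rewrite -map_trmx char_poly_tr. Qed.

End Spec.

Section MP.
Variable R : rcfType.
Variables m n : nat.

Lemma range_fact (B C : 'M[R]_(m, n)) :
  (forall y, in_range B y -> in_range C y) -> exists W : 'M[R]_(n, n), B = C *m W.
Proof.
move=> h.
have : forall j : 'I_n, exists w : 'cV[R]_n, B *m delta_mx j 0 = C *m w.
  by move=> j; apply: h; exists (delta_mx j 0).
case/fin_all_exists => w hw.
exists (\matrix_(i, j) w j i 0); apply/matrixP => i j.
have := congr1 (fun M : 'cV[R]_m => M i 0) (hw j).
rewrite -colE [in LHS]mxE => ->.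
by rewrite !mxE; apply: eq_bigr => l _; rewrite mxE.
Qed.

Lemma null_fact p (B C : 'M[R]_(m, n)) (Z : 'M[R]_(n, p)) :
  (forall x, in_null B x -> in_null C x) -> B *m Z = 0 -> C *m Z = 0.
Proof.
move=> h BZ; apply/matrixP => i j.
have : in_null C (Z *m delta_mx j 0).
  by apply: h; rewrite /in_null mulmxA BZ mul0mx.
rewrite /in_null mulmxA -colE => /matrixP /(_ i 0).
by rewrite !mxE.
Qed.

Variables (A U V : 'M[R]_(m, n)) (X Y : 'M[R]_(n, m)).
Hypothesis hs : proper_splitting A U V.
Hypothesis hX : is_MP_inverse A X.
Hypothesis hY : is_MP_inverse U Y.

Lemma mp_eq1 : A *m X = U *m Y.
Proof.
case: hs => _ hr _; case: hX => AXA XAX AXt XAt; case: hY => UYU YUY UYt YUt.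
have [W UW] := range_fact (fun y => proj1 (hr y)).
have [W' AW] := range_fact (fun y => proj2 (hr y)).
have PQ : A *m X *m (U *m Y) = U *m Y.
  by rewrite mulmxA UW !mulmxA AXA.
have QP : U *m Y *m (A *m X) = A *m X.
  by rewrite mulmxA {1}AW !mulmxA UYU -AW.
by rewrite -AXt -QP trmx_mul AXt UYt PQ.
Qed.

Lemma mp_eq2 : X *m A = Y *m U.
Proof.
case: hs => _ _ hn; case: hX => AXA XAX AXt XAt; case: hY => UYU YUY UYt YUt.
have h1 : A *m (1%:M - Y *m U) = 0.
  apply: (null_fact (fun x => proj1 (hn x))).
  by rewrite mulmxBr mulmx1 mulmxA UYU subrr.
have h2 : U *m (1%:M - X *m A) = 0.
  apply: (null_fact (fun x => proj2 (hn x))).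
  by rewrite mulmxBr mulmx1 mulmxA AXA subrr.
have AYU : A *m (Y *m U) = A.
  by move/eqP: h1; rewrite mulmxBr mulmx1 subr_eq0 => /eqP <-.
have UXA : U *m (X *m A) = U.
  by move/eqP: h2; rewrite mulmxBr mulmx1 subr_eq0 => /eqP <-.
have PQ : X *m A *m (Y *m U) = X *m A by rewrite -mulmxA AYU.
have QP : Y *m U *m (X *m A) = Y *m U by rewrite -mulmxA UXA.
by rewrite -XAt -PQ trmx_mul XAt YUt QP.
Qed.

Lemma mp_id1 : Y *m V *m X = X - Y.
Proof.
case: hs => AUV _ _; case: hX => AXA XAX AXt XAt; case: hY => UYU YUY UYt YUt.
have -> : V = U - A by rewrite AUV opprB addrC subrK.
by rewrite mulmxBr mulmxBl -mp_eq2 XAX -mulmxA mp_eq1 mulmxA YUY.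
Qed.

Lemma mp_id2 : X *m V *m Y = X - Y.
Proof.
case: hs => AUV _ _; case: hX => AXA XAX AXt XAt; case: hY => UYU YUY UYt YUt.
have -> : V = U - A by rewrite AUV opprB addrC subrK.
by rewrite mulmxBr mulmxBl -mulmxA -mp_eq1 mulmxA XAX mp_eq2 YUY.
Qed.

End MP.

Section Core.
Variable R : rcfType.
Local Notation rc := (real_complex R).

Lemma pos_sum_mul k (a b : 'I_k -> R) j1 :
  (forall j, 0 < a j) -> (forall j, 0 <= b j) -> 0 < b j1 -> 0 < \sum_j a j * b j.
Proof.
move=> ap bp b1; rewrite (bigD1 j1) //=.
apply: (lt_le_trans (mulr_gt0 (ap j1) b1)); rewrite lerDl.
by apply: sumr_ge0 => j _; rewrite mulr_ge0 // ltW.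
Qed.

Lemma core n m (T : 'M[R]_n) (S : 'M[R]_m) (X D : 'M[R]_(n, m)) (i0 : 'I_m) (i1 : 'I_n) :
  (forall i j, 0 <= T i j) -> (forall i j, 0 <= S i j) -> (forall i j, 0 <= X i j) ->
  (forall i j, 0 < D i j) -> D = X *m S - T *m X ->
  exists r : R, [/\ 0 < r, exists2 w : 'cV[R]_m, w != 0 & S *m w = r *: w &
     forall z, root (char_poly (map_mx rc T)) z -> Normc.normc z < r].
Proof.
move=> T0 S0 X0 D0 DE.
have [r [w [w0 wnz] Sw]] := PF_eig S0 i0.
have [j1 wj1] : exists j, 0 < w j 0.
  have [j hj] : exists j, w j 0 != 0.
    apply/existsP; apply: contraNT wnz => /existsPn h; apply/eqP/matrixP => i j.
    by rewrite (ord1 j) mxE; move: (h i); rewrite negbK => /eqP.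
  by exists j; rewrite lt_neqAle eq_sym hj w0.
have XSp : forall i j, 0 < (X *m S) i j.
  move=> i j; have : (X *m S) i j = D i j + (T *m X) i j.
    by rewrite DE !mxE addrNK.
  move=> ->; apply: (lt_le_trans (D0 i j)); rewrite lerDl mxE.
  by apply: sumr_ge0 => l _; apply: mulr_ge0.
have XSw : forall i, 0 < (X *m S *m w) i 0.
  by move=> i; rewrite mxE; apply: (@pos_sum_mul m (fun j => (X *m S) i j) (fun j => w j 0) j1).
have Dw : forall i, 0 < (D *m w) i 0.
  by move=> i; rewrite mxE; apply: (@pos_sum_mul m (fun j => D i j) (fun j => w j 0) j1).
pose x := X *m w.
have x0 : forall i, 0 <= x i 0.
  by move=> i; rewrite mxE; apply: sumr_ge0 => l _; apply: mulr_ge0.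
have XSwE : X *m S *m w = r *: x by rewrite -mulmxA Sw scalemxAr.
have rx : forall i, 0 < r * x i 0 by move=> i; have := XSw i; rewrite XSwE mxE.
have r0 : 0 < r.
  rewrite ltNge; apply/negP => r0; have := rx i1.
  by rewrite ltNge mulr_le0_ge0.
have xp : forall i, 0 < x i 0 by move=> i; have := rx i; rewrite pmulr_rgt0.
have TX : T *m X = X *m S - D by rewrite DE opprB addrC subrK.
have hx : forall i, (T *m x) i 0 < r * x i 0.
  move=> i; have := Dw i; rewrite /x mulmxA TX mulmxBl XSwE !mxE.
  by move=> h; rewrite ltrBlDr ltrDl.
exists r; split => //; first by exists w.
exact: (U_bound T0 xp hx).
Qed.

End Core.

Lemma rC_neq0 (R : rcfType) (r : R) : 0 < r -> (real_complex R r) != 0.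
Proof. by move=> r0; rewrite eq_complex /= (gt_eqF r0). Qed.

Unset Implicit Arguments.
Set Strict Implicit.

Theorem theorem4p9 (R : rcfType) (m n : nat) (Hm : (0 < m)%N) (Hn : (0 < n)%N)
    (A U1 V1 U2 V2 : 'M[R]_(m, n)) (Ad U1d U2d : 'M[R]_(n, m))
    (hAd : is_MP_inverse A Ad) (hU1d : is_MP_inverse U1 U1d) (hU2d : is_MP_inverse U2 U2d)
    (semimono : mx_le 0 Ad)
    (types : (pns_type_I A U1 V1 U1d /\ pns_type_II A U2 V2 U2d) \/
             (pns_type_II A U1 V1 U1d /\ pns_type_I A U2 V2 U2d))
    (conv1 : convergent_splitting U1 V1 U1d) (conv2 : convergent_splitting U2 V2 U2d)
    (hlt : mx_lt U2d U1d) :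
  (exists alpha : R, [/\ 0 < alpha, alpha < 1 & mx_le U2d (alpha *: U1d)]) /\
  spectral_radius (U1d *m V1) < spectral_radius (U2d *m V2) /\
  spectral_radius (U2d *m V2) < 1.
Proof.
split.
  pose F := fun ij : 'I_n * 'I_m => U2d ij.1 ij.2 / U1d ij.1 ij.2.
  pose mx := \big[Num.max/0]_(ij | 0 < U1d ij.1 ij.2) F ij.
  have mx1 : mx < 1.
    rewrite /mx; apply: (big_ind (fun x => x < 1)) => //.
      by move=> x y x1 y1; rewrite gt_max x1 y1.
    by move=> ij h; rewrite /F ltr_pdivrMr // mul1r; apply: hlt.
  exists (Num.max 2^-1 mx); split.
  - by rewrite lt_max invr_gt0 ltr0n.
  - by rewrite gt_max mx1 invf_lt1 ?ltr0n // ltr1n.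
  - move=> i j; rewrite mxE; case: (ltrP 0 (U1d i j)) => h.
      rewrite -ler_pdivrMr // le_max; apply/orP; right.
      exact: (@le_bigmax_cond _ _ _ 0 (i, j) (fun ij => 0 < U1d ij.1 ij.2) F h).
    apply: (le_trans (ltW (hlt i j))).
    rewrite -subr_ge0 -{2}(mul1r (U1d i j)) -mulrBl mulr_le0 // subr_le0.
    by rewrite ge_max (ltW mx1) invf_le1 ?ltr0n // ler1n.
split; last exact: conv2.
have i0 : 'I_m := Ordinal Hm.
have j0 : 'I_n := Ordinal Hn.
have Ad0 : forall i j, 0 <= Ad i j by move=> i j; have := semimono i j; rewrite mxE.
have D0 : forall i j, 0 < (U1d - U2d) i j by move=> i j; rewrite !mxE subr_gt0; apply: hlt.
case: types => [[[ps1 t1] [ps2 t2]] | [[ps1 t1] [ps2 t2]]].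
- have T0 : forall i j, 0 <= (U1d *m V1) i j by move=> i j; have := t1 i j; rewrite mxE.
  have S0 : forall i j, 0 <= (V2 *m U2d) i j by move=> i j; have := t2 i j; rewrite mxE.
  have DE : U1d - U2d = Ad *m (V2 *m U2d) - U1d *m V1 *m Ad.
    by rewrite mulmxA (mp_id2 ps2 hAd hU2d) (mp_id1 ps1 hAd hU1d) opprB (addrC (Ad - U2d)) addrA subrK.
  have [r [r0 [w wnz Sw] hz]] := core i0 j0 T0 S0 Ad0 D0 DE.
  apply: (lt_le_trans (sr_lt r0 hz)).
  have := sr_root_le (root_transfer (rC_neq0 r0) (real_eig_root wnz Sw)).
  by rewrite normc_real ger0_norm // ltW.
- have S0 : forall i j, 0 <= (V1 *m U1d)^T i j by move=> i j; have := t1 j i; rewrite !mxE.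
  have T0 : forall i j, 0 <= (U2d *m V2)^T i j by move=> i j; have := t2 j i; rewrite !mxE.
  have Ad0' : forall i j, 0 <= Ad^T i j by move=> i j; rewrite mxE.
  have D0' : forall i j, 0 < (U1d - U2d)^T i j by move=> i j; rewrite mxE.
  have DE : (U1d - U2d)^T = Ad^T *m (U2d *m V2)^T - (V1 *m U1d)^T *m Ad^T.
    rewrite -!trmx_mul -linearB /=; congr trmx.
    by rewrite mulmxA (mp_id1 ps2 hAd hU2d) (mp_id2 ps1 hAd hU1d) opprB (addrC (Ad - U2d)) addrA subrK.
  have [r [r0 [w wnz Sw] hz]] := core j0 i0 S0 T0 Ad0' D0' DE.
  have lt1 : spectral_radius (U1d *m V1) < r.
    apply: (sr_lt r0) => z rz.
    have [->|z0] := eqVneq z 0; first by rewrite Normc.normc0.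
    by apply: hz; rewrite root_tr; apply: root_transfer.
  apply: (lt_le_trans lt1).
  have := real_eig_root wnz Sw; rewrite root_tr => /sr_root_le.
  by rewrite normc_real ger0_norm // ltW.
Qed.
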